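(* For every basic patterns (graphs) $P_1$ and $P_2$, the basic pattern $P_1\cup P_2$ is equivalent to the pattern $P_1\ \mathrm{JOIN}\ P_2$ and to the pattern $P_2\ \mathrm{JOIN}\ P_1$; that is, for every graph $G$ the three patterns have the same value over $G$.
   Context: Labels $\mathcal{L}$ are the disjoint union of constants $\mathcal{C}$ and variables $\mathcal{V}$. A graph $X$ consists of a set of nodes $X_N\subseteq\mathcal{L}$ and a set of triples $X_T\subseteq\mathcal{L}^3$ whose subjects and objects are nodes (isolated nodes allowed); its labels $\mathcal{L}(X)$ are its nodes and predicates, $\mathcal{V}(X)=\mathcal{V}\cap\mathcal{L}(X)$; the union $X_1\cup X_2$ is componentwise union of nodes and triples. A match $m:X\to G$ is a function $\mathcal{L}(X)\to\mathcal{L}(G)$ mapping nodes to nodes, triples (componentwise) to triples, and fixing every constant; a set of matches all from $X$ to $G$ is written $\underline{m}:X\Rightarrow G$ (a set of matches is determined by its domain graph, codomain graph and underlying functions). Two matches $m_1:X_1\to G_1$, $m_2:X_2\to G_2$ are compatible if they agree on $\mathcal{V}(X_1)\cap\mathcal{V}(X_2)$, and then $m_1\bowtie m_2:X_1\cup X_2\to G_1\cup G_2$ is the match agreeing with $m_1$ on $\mathcal{L}(X_1)$ and $m_2$ on $\mathcal{L}(X_2)$. For $\underline{m}:X\Rightarrow G$ and $\underline{p}:Y\Rightarrow H$, $\mathrm{Join}(\underline{m},\underline{p})=\{m\bowtie p\mid m\in\underline{m},p\in\underline{p},m\text{ and }p\text{ compatible}\}:X\cup Y\Rightarrow G\cup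 H$. The value of a basic pattern (graph) $P$ over a graph $G$ is the set of all matches from $P$ to $G$, as a set of matches $P\Rightarrow G$. The value of $P_1\ \mathrm{JOIN}\ P_2$ over $G$ is $\mathrm{Join}(\underline{m}_1,\underline{m}_2)$ where $\underline{m}_1:X_1\Rightarrow G_1$ is the value of $P_1$ over $G$ and $\underline{m}_2$ is the value of $P_2$ over $G_1$. Two patterns are equivalent if they have the same value (same set of matches with same domain and codomain graphs) over every graph $G$. *)

(* Defs.v *)
Set Implicit Arguments.

Section Defs.
Variables (C V : Type).

(* Labels: disjoint union of constants (inl) and variables (inr). *)
Definition label := (C + V)%type.

Record graph := Graph {
  nodes : label -> Prop;
  triples : label -> label -> label -> Prop }.

Definition wf_graph (X : graph) : Prop :=
  forall s p o, triples X s p o -> nodes X s /\ nodes X o.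

Definition labels (X : graph) (l : label) : Prop :=
  nodes X l \/ exists s o, triples X s l o.

Definition vars (X : graph) (v : V) : Prop := labels X (inr v).

Definition gunion (X Y : graph) : graph :=
  Graph (fun n => nodes X n \/ nodes Y n)
        (fun s p o => triples X s p o \/ triples Y s p o).

Definition graph_eq (X Y : graph) : Prop :=
  (forall n, nodes X n <-> nodes Y n) /\
  (forall s p o, triples X s p o <-> triples Y s p o).

(* A match X -> G, represented by a function on labels whose restriction to
   L(X) is the match. *)
Definition is_match (X G : graph) (m : label -> label) : Prop :=
  (forall l, labels X l -> labels G (m l)) /\
  (forall n, nodes X n -> nodes G (m n)) /\
  (forall s p o, triples X s p o -> triples G (m s) (m p) (m o)) /\
  (forall c, labels X (inl c) -> m (inl c) = inl c).

Definition agree_on (A : label -> Prop) (f g : label -> label) : Prop :=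
  forall l, A l -> f l = g l.

(* A set of matches X => G : domain graph, codomain graph, and the set of
   underlying functions (significant only on L(X)). *)
Record mset := MSet {
  mdom : graph;
  mcod : graph;
  mfun : (label -> label) -> Prop }.

Definition compatible (X1 X2 : graph) (m1 m2 : label -> label) : Prop :=
  forall v, vars X1 v -> vars X2 v -> m1 (inr v) = m2 (inr v).

(* Join(m1, m2) : X1 u X2 => G1 u G2, whose elements are the m1 ⋈ m2
   (a function agreeing with m1 on L(X1) and with m2 on L(X2)). *)
Definition Join (S1 S2 : mset) : mset :=
  MSet (gunion (mdom S1) (mdom S2)) (gunion (mcod S1) (mcod S2))
    (fun f => exists m1 m2, mfun S1 m1 /\ mfun S2 m2 /\
       compatible (mdom S1) (mdom S2) m1 m2 /\
       agree_on (labels (mdom S1)) f m1 /\ agree_on (labels (mdom S2)) f m2).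

Definition mset_eq (S T : mset) : Prop :=
  graph_eq (mdom S) (mdom T) /\ graph_eq (mcod S) (mcod T) /\
  (forall f, mfun S f -> exists g, mfun T g /\ agree_on (labels (mdom S)) f g) /\
  (forall g, mfun T g -> exists f, mfun S f /\ agree_on (labels (mdom T)) g f).

Inductive pattern :=
| Basic (X : graph)
| JOIN (P1 P2 : pattern).

Fixpoint eval (P : pattern) (G : graph) : mset :=
  match P with
  | Basic X => MSet X G (is_match X G)
  | JOIN P1 P2 =>
      let m1 := eval P1 G in Join m1 (eval P2 (mcod m1))
  end.

Definition equivalent (P Q : pattern) : Prop :=
  forall G, wf_graph G -> mset_eq (eval P G) (eval Q G).

End Defs.

(* Main.v *)
Require Import Defs.

Section L.
Variables (C V : Type).

Lemma key (Q P1 P2 : graph C V) :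
  wf_graph P1 -> wf_graph P2 ->
  (forall n, nodes Q n <-> nodes P1 n \/ nodes P2 n) ->
  (forall s p o, triples Q s p o <-> triples P1 s p o \/ triples P2 s p o) ->
  equivalent (Basic Q) (JOIN (Basic P1) (Basic P2)).
Proof.
  intros W1 W2 HN HT G WG.
  assert (HL : forall l, labels Q l <-> labels P1 l \/ labels P2 l).
  { intro l; unfold labels; split.
    - intros [H|[s [o H]]].
      + apply HN in H; tauto.
      + apply HT in H; destruct H; [left|right]; right; eauto.
    - intros [[H|[s [o H]]]|[H|[s [o H]]]].
      + left; apply HN; tauto.
      + right; exists s, o; apply HT; tauto.
      + left; apply HN; tauto.
      + right; exists s, o; apply HT; tauto. }
  simpl. unfold mset_eq; simpl.
  split; [|split; [|split]].
  - split; [exact HN | exact HT].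
  - split; simpl; tauto.
  - intros f [M1 [M2 [M3 M4]]].
    assert (Hm : forall P, (forall l, labels P l -> labels Q l) ->
                 (forall n, nodes P n -> nodes Q n) ->
                 (forall s p o, triples P s p o -> triples Q s p o) ->
                 is_match P G f).
    { intros P a b c; split; [|split; [|split]]; eauto. }
    exists f; split; [|intros l _; reflexivity].
    exists f, f; split; [|split; [|split; [|split]]].
    + apply Hm; intros; [apply HL|apply HN|apply HT]; tauto.
    + apply Hm; intros; [apply HL|apply HN|apply HT]; tauto.
    + intros v _ _; reflexivity.
    + intros l _; reflexivity.
    + intros l _; reflexivity.
  - intros g [m1 [m2 [[A1 [B1 [C1 D1]]] [[A2 [B2 [C2 D2]]] [Hc [E1 E2]]]]]].
    exists g; split; [|intros l _; reflexivity].
    assert (N1 : forall n, nodes P1 n -> labels P1 n) by (intros; left; auto).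
    assert (N2 : forall n, nodes P2 n -> labels P2 n) by (intros; left; auto).
    split; [|split; [|split]].
    + intros l Hl; apply HL in Hl; destruct Hl as [Hl|Hl].
      * rewrite (E1 l Hl); auto.
      * rewrite (E2 l Hl); auto.
    + intros n Hn; apply HN in Hn; destruct Hn as [Hn|Hn].
      * rewrite (E1 n (N1 _ Hn)); auto.
      * rewrite (E2 n (N2 _ Hn)); auto.
    + intros s p o H; apply HT in H; destruct H as [H|H].
      * destruct (W1 _ _ _ H) as [Hs Ho].
        rewrite (E1 s (N1 _ Hs)), (E1 o (N1 _ Ho)), (E1 p (or_intror (ex_intro _ s (ex_intro _ o H)))); auto.
      * destruct (W2 _ _ _ H) as [Hs Ho].
        rewrite (E2 s (N2 _ Hs)), (E2 o (N2 _ Ho)), (E2 p (or_intror (ex_intro _ s (ex_intro _ o H)))); auto.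
    + intros c Hl; apply HL in Hl; destruct Hl as [Hl|Hl].
      * rewrite (E1 _ Hl); auto.
      * rewrite (E2 _ Hl); auto.
Qed.
End L.

Theorem proposition3 (C V : Type) (P1 P2 : graph C V) :
  wf_graph P1 -> wf_graph P2 ->
  equivalent (Basic (gunion P1 P2)) (JOIN (Basic P1) (Basic P2)) /\
  equivalent (Basic (gunion P1 P2)) (JOIN (Basic P2) (Basic P1)).
Proof.
  intros W1 W2; split; apply key; auto; simpl; intros; tauto.
Qed.
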